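(* Let $k$ be a field of characteristic $0$, $V$ a $k$-module, and $L=(\mathcal{L}ie(\mathcal{M}ag(V)),\circ,[\,,\,])$ the free PostLie algebra on $V$. The right $\mathcal U(L_{\{,\}})$-module $\mathcal{M}ag(V)$ is isomorphic to the free right $\mathcal U(L_{\{,\}})$-module generated by $V$: $$\mathcal{M}ag(V)\cong V\otimes\mathcal U(L_{\{,\}}).$$
   Context: A PostLie algebra is a $k$-module with operations $\circ$, $[\,,\,]$, $[\,,\,]$ a Lie bracket, satisfying $(x\circ y)\circ z-x\circ(y\circ z)-(x\circ z)\circ y+x\circ(z\circ y)=x\circ[y,z]$ and $[x,y]\circ z=[x\circ z,y]+[x,y\circ z]$. The free PostLie algebra on $V$ has underlying module $\mathcal{L}ie(\mathcal{M}ag(V))$, the free Lie algebra on the free magmatic algebra $\mathcal{M}ag(V)$, with $[\,,\,]$ the free Lie bracket; $\mathcal{M}ag(V)\subset L$ (weight-one part in the Lie direction) and on $\mathcal{M}ag(V)$ the operation $\circ$ is the free magmatic product. $L_{\{,\}}$ is the Lie algebra $(L,\{\,,\,\})$ with $\{x,y\}=x\circ y-y\circ x+[x,y]$; $L$ is a right $L_{\{,\}}$-module via $(x,y)\mapsto x\circ y$, extended to a right action $\star$ of the universal enveloping algebra $\mathcal U(L_{\{,\}})$ by $g\star(v_1\otimes\cdots\otimes v_n)=((g\circ v_1)\cdots)\circ v_n$. The submodule $\mathcal{M}ag(V)\subset L$ is stable under this action, hence is a right $\mathcal U(L_{\{,\}})$-module. *)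

(* Defs.v *)
From HB Require Import structures.
From mathcomp Require Import all_boot all_algebra.
Set Implicit Arguments. Unset Strict Implicit. Unset Printing Implicit Defensive.
Import GRing.Theory.
Local Open Scope ring_scope.

Definition is_klinear (k : fieldType) (X Y : lmodType k) (f : X -> Y) : Prop :=
  forall (a : k) (x y : X), f (a *: x + y) = a *: f x + f y.

Definition is_bilinear (k : fieldType) (X Y Z : lmodType k) (op : X -> Y -> Z)
  : Prop :=
  (forall y, is_klinear (fun x => op x y)) /\ (forall x, is_klinear (op x)).

Definition is_lie_bracket (k : fieldType) (L : lmodType k) (br : L -> L -> L)
  : Prop :=
  [/\ is_bilinear br, (forall x, br x x = 0) &
      (forall x y z, br x (br y z) + br y (br z x) + br z (br x y) = 0)].

Definition is_postLie (k : fieldType) (L : lmodType k) (circ br : L -> L -> L)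
  : Prop :=
  [/\ is_lie_bracket br, is_bilinear circ,
      (forall x y z, circ (circ x y) z - circ x (circ y z)
                      - circ (circ x z) y + circ x (circ z y) = circ x (br y z)) &
      (forall x y z, circ (br x y) z = br (circ x z) y + br x (circ y z))].

Definition is_postLie_hom (k : fieldType) (L P : lmodType k)
  (circL brL : L -> L -> L) (circP brP : P -> P -> P) (g : L -> P) : Prop :=
  [/\ is_klinear g, (forall x y, g (circL x y) = circP (g x) (g y)) &
      (forall x y, g (brL x y) = brP (g x) (g y))].

Definition is_free_postLie (k : fieldType) (V L : lmodType k)
  (circ br : L -> L -> L) (j : V -> L) : Prop :=
  [/\ is_postLie circ br, is_klinear j &
      forall (P : lmodType k) (circP brP : P -> P -> P), is_postLie circP brP ->
      forall f : V -> P, is_klinear f ->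
      exists g : L -> P,
        (is_postLie_hom circ br circP brP g /\ forall v, g (j v) = f v) /\
        (forall g' : L -> P, is_postLie_hom circ br circP brP g' ->
           (forall v, g' (j v) = f v) -> forall x, g' x = g x)].

(* The sub-k-module Mag(V) of L: the smallest subspace containing j(V) and
   closed under circ, i.e. the magmatic subalgebra generated by V. *)
Definition in_mag (k : fieldType) (V L : lmodType k) (circ : L -> L -> L)
  (j : V -> L) (x : L) : Prop :=
  forall S : L -> Prop, (forall v, S (j v)) -> S 0 ->
    (forall (a : k) y z, S y -> S z -> S (a *: y + z)) ->
    (forall y z, S y -> S z -> S (circ y z)) -> S x.

Definition curly (k : fieldType) (L : lmodType k) (circ br : L -> L -> L)
  (x y : L) : L := circ x y - circ y x + br x y.

Definition is_alg_hom (k : fieldType) (A B : algType k) (h : A -> B) : Prop :=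
  [/\ is_klinear h, h 1 = 1 & forall a b, h (a * b) = h a * h b].

Definition is_lie_to_alg (k : fieldType) (g : lmodType k) (brg : g -> g -> g)
  (A : algType k) (phi : g -> A) : Prop :=
  is_klinear phi /\ forall x y, phi (brg x y) = phi x * phi y - phi y * phi x.

Definition is_UEA (k : fieldType) (g : lmodType k) (brg : g -> g -> g)
  (A : algType k) (phi : g -> A) : Prop :=
  is_lie_to_alg brg phi /\
  forall (B : algType k) (psi : g -> B), is_lie_to_alg brg psi ->
    exists h : A -> B, (is_alg_hom h /\ forall x, h (phi x) = psi x) /\
      (forall h' : A -> B, is_alg_hom h' -> (forall x, h' (phi x) = psi x) ->
         forall a, h' a = h a).

Definition is_right_mod (k : fieldType) (A : algType k) (N : lmodType k)
  (act : N -> A -> N) : Prop :=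
  [/\ is_bilinear act, (forall n, act n 1 = n) &
      forall n a b, act (act n a) b = act n (a * b)].

(* The subspace M (a predicate on L), stable under the right A-action star,
   together with the generating map j : V -> M, is the free right A-module
   generated by V (i.e. M ~ V (x) A via v (x) a |-> j v * a). *)
Definition is_free_right_mod_on (k : fieldType) (A : algType k) (V L : lmodType k)
  (M : L -> Prop) (star : L -> A -> L) (j : V -> L) : Prop :=
  forall (N : lmodType k) (act : N -> A -> N), is_right_mod act ->
  forall f : V -> N, is_klinear f ->
  exists g : L -> N,
    ((forall (c : k) x y, M x -> M y -> g (c *: x + y) = c *: g x + g y) /\
     (forall x a, M x -> g (star x a) = act (g x) a) /\
     (forall v, g (j v) = f v)) /\
    (forall g' : L -> N,
       (forall (c : k) x y, M x -> M y -> g' (c *: x + y) = c *: g' x + g' y) ->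
       (forall x a, M x -> g' (star x a) = act (g' x) a) ->
       (forall v, g' (j v) = f v) ->
       forall x, M x -> g' x = g x).

(* Main.v *)
Require Import Defs.
From HB Require Import structures.
From mathcomp Require Import all_boot all_algebra.
From mathcomp Require Import boolp.
Import GRing.Theory.
Local Open Scope ring_scope.
Module Aux.
Set Implicit Arguments. Unset Strict Implicit.


Section KL.
Variables (k : fieldType) (X Y : lmodType k) (f : X -> Y) (H : is_klinear f).
Lemma kl0 : f 0 = 0.
Proof. have E := H 1 0 0; rewrite scaler0 addr0 scale1r -[LHS]addr0 in E. by move/addrI: E. Qed.
Lemma klD x y : f (x + y) = f x + f y.
Proof. by have := H 1 x y; rewrite !scale1r. Qed.
Lemma klZ a x : f (a *: x) = a *: f x.
Proof. by have := H a x 0; rewrite !addr0 kl0 addr0. Qed.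
Lemma klN x : f (- x) = - f x.
Proof. by rewrite -scaleN1r klZ scaleN1r. Qed.
Lemma klB x y : f (x - y) = f x - f y.
Proof. by rewrite klD klN. Qed.
End KL.

Section MkAlg.
Variables (k : fieldType) (T : Type).
Variables (z : T) (ad : T -> T -> T) (op : T -> T) (o : T) (mu : T -> T -> T)
  (sc : k -> T -> T).
Hypotheses (addA : associative ad) (addC : commutative ad) (add0 : left_id z ad)
  (addN : left_inverse z op ad) (mulA : associative mu) (mul1l : left_id o mu)
  (mul1r : right_id o mu) (mulDl : left_distributive mu ad)
  (mulDr : right_distributive mu ad) (oz : o <> z)
  (scA : forall a b v, sc a (sc b v) = sc (a * b) v) (sc1 : forall v, sc 1 v = v)
  (scDr : forall a, {morph sc a : x y / ad x y})
  (scDl : forall v, {morph sc^~ v : a b / a + b >-> ad a b})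
  (scAl : forall a u v, sc a (mu u v) = mu (sc a u) v)
  (scAr : forall a u v, sc a (mu u v) = mu u (sc a v)).
Definition MA : Type := let _ := (addA, addC, add0, addN, mulA, mul1l, mul1r, mulDl, mulDr, oz, scA, sc1, scDr, scDl, scAl, scAr) in T.
HB.instance Definition _ := gen_eqMixin MA.
HB.instance Definition _ := gen_choiceMixin MA.
HB.instance Definition _ := GRing.isZmodule.Build MA addA addC add0 addN.
Lemma MA_one_neq0 : (o : MA) != 0. Proof. exact/eqP. Qed.
HB.instance Definition _ := GRing.Zmodule_isNzRing.Build MA mulA mul1l mul1r mulDl mulDr MA_one_neq0.
HB.instance Definition _ := GRing.Zmodule_isLmodule.Build k MA scA sc1 scDr scDl.
HB.instance Definition _ := GRing.Lmodule_isLalgebra.Build k MA scAl.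
HB.instance Definition _ := GRing.Lalgebra_isAlgebra.Build k MA scAr.
End MkAlg.

Section MkLmod.
Variables (k : fieldType) (T : Type).
Variables (z : T) (ad : T -> T -> T) (op : T -> T) (sc : k -> T -> T).
Hypotheses (addA : associative ad) (addC : commutative ad) (add0 : left_id z ad)
  (addN : left_inverse z op ad)
  (scA : forall a b v, sc a (sc b v) = sc (a * b) v) (sc1 : forall v, sc 1 v = v)
  (scDr : forall a, {morph sc a : x y / ad x y})
  (scDl : forall v, {morph sc^~ v : a b / a + b >-> ad a b}).
Definition ML : Type := let _ := (addA, addC, add0, addN, scA, sc1, scDr, scDl) in T.
HB.instance Definition _ := gen_eqMixin ML.
HB.instance Definition _ := gen_choiceMixin ML.
HB.instance Definition _ := GRing.isZmodule.Build ML addA addC add0 addN.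
HB.instance Definition _ := GRing.Zmodule_isLmodule.Build k ML scA sc1 scDr scDl.
End MkLmod.

Section EndOp.
Variables (k : fieldType) (M : lmodType k) (m0 : M) (Hm0 : m0 <> 0).
Definition ET := {f : M -> M | is_klinear f}.
Lemma ET_eq (f g : ET) : (forall x, sval f x = sval g x) -> f = g.
Proof.
case: f g => f Hf [g Hg] /= E. have E' : f = g := funext E. subst.
by congr exist; apply: Prop_irrelevance.
Qed.
Lemma ez_l : is_klinear (fun _ : M => (0 : M)).
Proof. by move=> a x y; rewrite scaler0 addr0. Qed.
Definition ez : ET := exist _ _ ez_l.
Lemma ead_l (f g : ET) : is_klinear (fun x => sval f x + sval g x).
Proof. by move=> a x y; rewrite (proj2_sig f) (proj2_sig g) scalerDr addrACA. Qed.
Definition ead (f g : ET) : ET := exist _ _ (ead_l f g).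
Lemma eop_l (f : ET) : is_klinear (fun x => - sval f x).
Proof. by move=> a x y; rewrite (proj2_sig f) opprD scalerN. Qed.
Definition eop (f : ET) : ET := exist _ _ (eop_l f).
Lemma eone_l : is_klinear (fun x : M => x). Proof. by []. Qed.
Definition eone : ET := exist _ _ eone_l.
Lemma emul_l (f g : ET) : is_klinear (fun x => sval g (sval f x)).
Proof. by move=> a x y; rewrite (proj2_sig f) (proj2_sig g). Qed.
Definition emul (f g : ET) : ET := exist _ _ (emul_l f g).
Lemma esc_l (c : k) (f : ET) : is_klinear (fun x => c *: sval f x).
Proof. by move=> a x y; rewrite (proj2_sig f) scalerDr !scalerA mulrC. Qed.
Definition esc (c : k) (f : ET) : ET := exist _ _ (esc_l c f).
Lemma e_addA : associative ead. Proof. by move=> *; apply: ET_eq => x /=; rewrite addrA. Qed.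
Lemma e_addC : commutative ead. Proof. by move=> *; apply: ET_eq => x /=; rewrite addrC. Qed.
Lemma e_add0 : left_id ez ead. Proof. by move=> *; apply: ET_eq => x /=; rewrite add0r. Qed.
Lemma e_addN : left_inverse ez eop ead. Proof. by move=> *; apply: ET_eq => x /=; rewrite addNr. Qed.
Lemma e_mulA : associative emul. Proof. by move=> *; apply: ET_eq. Qed.
Lemma e_mul1l : left_id eone emul. Proof. by move=> *; apply: ET_eq. Qed.
Lemma e_mul1r : right_id eone emul. Proof. by move=> *; apply: ET_eq. Qed.
Lemma e_mulDl : left_distributive emul ead.
Proof. by move=> f g h; apply: ET_eq => x /=; rewrite (klD (proj2_sig h)). Qed.
Lemma e_mulDr : right_distributive emul ead. Proof. by move=> *; apply: ET_eq. Qed.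
Lemma e_oz : eone <> ez.
Proof. by move=> E; apply: Hm0; have := congr1 (fun f => sval f m0) E. Qed.
Lemma e_scA a b v : esc a (esc b v) = esc (a * b) v.
Proof. by apply: ET_eq => x /=; rewrite scalerA. Qed.
Lemma e_sc1 v : esc 1 v = v. Proof. by apply: ET_eq => x /=; rewrite scale1r. Qed.
Lemma e_scDr a : {morph esc a : x y / ead x y}.
Proof. by move=> f g; apply: ET_eq => x /=; rewrite scalerDr. Qed.
Lemma e_scDl v : {morph esc^~ v : a b / a + b >-> ead a b}.
Proof. by move=> a b; apply: ET_eq => x /=; rewrite scalerDl. Qed.
Lemma e_scAl a u v : esc a (emul u v) = emul (esc a u) v.
Proof. by apply: ET_eq => x /=; rewrite (klZ (proj2_sig v)). Qed.
Lemma e_scAr a u v : esc a (emul u v) = emul u (esc a v).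
Proof. by apply: ET_eq. Qed.
Definition EOp : algType k := @MA k ET ez ead eop eone emul esc e_addA e_addC e_add0 e_addN e_mulA e_mul1l e_mul1r
  e_mulDl e_mulDr e_oz e_scA e_sc1 e_scDr e_scDl e_scAl e_scAr.
Definition ev (f : EOp) : M -> M := sval (f : ET).
Lemma ev_mul f g x : ev (f * g) x = ev g (ev f x). Proof. by []. Qed.
Lemma ev_one x : ev 1 x = x. Proof. by []. Qed.
Lemma ev_lin c f g x : ev (c *: f + g) x = c *: ev f x + ev g x. Proof. by []. Qed.
Lemma ev_klin f : is_klinear (ev f). Proof. exact: proj2_sig. Qed.
Lemma EOp_eq (f g : EOp) : (forall x, ev f x = ev g x) -> f = g. Proof. exact: ET_eq. Qed.
Lemma ev_sub f g x : ev (f - g) x = ev f x - ev g x. Proof. by []. Qed.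
End EndOp.


Lemma sig_eqP (T : Type) (P : T -> Prop) (a b : {x | P x}) : sval a = sval b -> a = b.
Proof. case: a b => a Ha [b Hb] /= E; subst; congr exist; exact: Prop_irrelevance. Qed.

Section SubAlg.
Variables (k : fieldType) (U : algType k) (S : U -> Prop) (S1 : S 1)
  (Slin : forall c a b, S a -> S b -> S (c *: a + b))
  (Smul : forall a b, S a -> S b -> S (a * b)).
Definition ST := {a : U | S a}.
Lemma S0 : S 0. Proof. by have := Slin (-1) S1 S1; rewrite scaleN1r addNr. Qed.
Lemma SD a b : S a -> S b -> S (a + b). Proof. by move=> Ha Hb; have := Slin 1 Ha Hb; rewrite scale1r. Qed.
Lemma SN a : S a -> S (- a). Proof. by move=> Ha; have := Slin (-1) Ha S0; rewrite scaleN1r addr0. Qed.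
Lemma SZ c a : S a -> S (c *: a). Proof. by move=> Ha; have := Slin c Ha S0; rewrite addr0. Qed.
Definition sz : ST := exist _ _ S0.
Definition sad (a b : ST) : ST := exist _ _ (SD (proj2_sig a) (proj2_sig b)).
Definition sop (a : ST) : ST := exist _ _ (SN (proj2_sig a)).
Definition sone : ST := exist _ _ S1.
Definition smul (a b : ST) : ST := exist _ _ (Smul (proj2_sig a) (proj2_sig b)).
Definition ssc c (a : ST) : ST := exist _ _ (SZ c (proj2_sig a)).
Lemma s_addA : associative sad. Proof. by move=> *; apply: sig_eqP; rewrite /= addrA. Qed.
Lemma s_addC : commutative sad. Proof. by move=> *; apply: sig_eqP; rewrite /= addrC. Qed.
Lemma s_add0 : left_id sz sad. Proof. by move=> *; apply: sig_eqP; rewrite /= add0r. Qed.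
Lemma s_addN : left_inverse sz sop sad. Proof. by move=> *; apply: sig_eqP; rewrite /= addNr. Qed.
Lemma s_mulA : associative smul. Proof. by move=> *; apply: sig_eqP; rewrite /= mulrA. Qed.
Lemma s_mul1l : left_id sone smul. Proof. by move=> *; apply: sig_eqP; rewrite /= mul1r. Qed.
Lemma s_mul1r : right_id sone smul. Proof. by move=> *; apply: sig_eqP; rewrite /= mulr1. Qed.
Lemma s_mulDl : left_distributive smul sad. Proof. by move=> *; apply: sig_eqP; rewrite /= mulrDl. Qed.
Lemma s_mulDr : right_distributive smul sad. Proof. by move=> *; apply: sig_eqP; rewrite /= mulrDr. Qed.
Lemma s_oz : sone <> sz. Proof. by move/(congr1 sval) => /= /eqP; rewrite oner_eq0. Qed.
Lemma s_scA a b v : ssc a (ssc b v) = ssc (a * b) v. Proof. by apply: sig_eqP; rewrite /= scalerA. Qed.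
Lemma s_sc1 v : ssc 1 v = v. Proof. by apply: sig_eqP; rewrite /= scale1r. Qed.
Lemma s_scDr a : {morph ssc a : x y / sad x y}. Proof. by move=> *; apply: sig_eqP; rewrite /= scalerDr. Qed.
Lemma s_scDl v : {morph ssc^~ v : a b / a + b >-> sad a b}. Proof. by move=> *; apply: sig_eqP; rewrite /= scalerDl. Qed.
Lemma s_scAl a u v : ssc a (smul u v) = smul (ssc a u) v. Proof. by apply: sig_eqP; rewrite /= scalerAl. Qed.
Lemma s_scAr a u v : ssc a (smul u v) = smul u (ssc a v). Proof. by apply: sig_eqP; rewrite /= scalerAr. Qed.
Definition SA : algType k := @MA k ST sz sad sop sone smul ssc s_addA s_addC s_add0 s_addN
  s_mulA s_mul1l s_mul1r s_mulDl s_mulDr s_oz s_scA s_sc1 s_scDr s_scDl s_scAl s_scAr.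
Definition sval' (a : SA) : U := sval (a : ST).
Lemma sval'_lin c a b : sval' (c *: a + b) = c *: sval' a + sval' b. Proof. by []. Qed.
Lemma sval'_mul a b : sval' (a * b) = sval' a * sval' b. Proof. by []. Qed.
Lemma sval'_one : sval' 1 = 1. Proof. by []. Qed.
Lemma sval'_P a : S (sval' a). Proof. exact: proj2_sig. Qed.
Lemma SA_eq (a b : SA) : sval' a = sval' b -> a = b. Proof. exact: sig_eqP. Qed.
End SubAlg.

Lemma uea_gen (k : fieldType) (g : lmodType k) (brg : g -> g -> g) (U : algType k)
  (phi0 : g -> U) (HU : is_UEA brg phi0) (S : U -> Prop) (S1 : S 1)
  (Slin : forall c a b, S a -> S b -> S (c *: a + b))
  (Smul : forall a b, S a -> S b -> S (a * b)) (Sphi : forall x, S (phi0 x)) :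
  forall a, S a.
Proof.
case: HU => [[Hlin Hlie] Huniv].
pose B := SA S1 Slin Smul.
pose psi (x : g) : B := exist _ _ (Sphi x) : ST S.
have Hpsi : is_lie_to_alg brg psi.
  split.
    by move=> c x y; apply: SA_eq; rewrite sval'_lin /sval' /= Hlin.
  by move=> x y; apply: SA_eq; rewrite /sval' /= Hlie.
have [h [[[hl h1 hm] hphi] _]] := Huniv B psi Hpsi.
have [h0 [_ uniq]] := Huniv U phi0 (conj Hlin Hlie).
have e1 := uniq id (And3 (fun c x y => erefl) erefl (fun a b => erefl)) (fun x => erefl).
have e2 : forall a, sval' (h a) = h0 a.
  apply: uniq => [|x]; last by rewrite hphi.
  split => [c x y|| a b]; first by rewrite hl sval'_lin.
    by rewrite h1.
  by rewrite hm sval'_mul.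
by move=> a; have := sval'_P (h a); rewrite e2 -(e1 a).
Qed.


Section SubLmod.
Variables (k : fieldType) (L : lmodType k) (S : L -> Prop) (S0 : S 0)
  (Slin : forall c a b, S a -> S b -> S (c *: a + b)).
Definition LT := {a : L | S a}.
Lemma LSD a b : S a -> S b -> S (a + b). Proof. by move=> Ha Hb; have := Slin 1 Ha Hb; rewrite scale1r. Qed.
Lemma LSN a : S a -> S (- a). Proof. by move=> Ha; have := Slin (-1) Ha S0; rewrite scaleN1r addr0. Qed.
Lemma LSZ c a : S a -> S (c *: a). Proof. by move=> Ha; have := Slin c Ha S0; rewrite addr0. Qed.
Definition lz : LT := exist _ _ S0.
Definition lad (a b : LT) : LT := exist _ _ (LSD (proj2_sig a) (proj2_sig b)).
Definition lop (a : LT) : LT := exist _ _ (LSN (proj2_sig a)).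
Definition lsc c (a : LT) : LT := exist _ _ (LSZ c (proj2_sig a)).
Lemma l_addA : associative lad. Proof. by move=> *; apply: sig_eqP; rewrite /= addrA. Qed.
Lemma l_addC : commutative lad. Proof. by move=> *; apply: sig_eqP; rewrite /= addrC. Qed.
Lemma l_add0 : left_id lz lad. Proof. by move=> *; apply: sig_eqP; rewrite /= add0r. Qed.
Lemma l_addN : left_inverse lz lop lad. Proof. by move=> *; apply: sig_eqP; rewrite /= addNr. Qed.
Lemma l_scA a b v : lsc a (lsc b v) = lsc (a * b) v. Proof. by apply: sig_eqP; rewrite /= scalerA. Qed.
Lemma l_sc1 v : lsc 1 v = v. Proof. by apply: sig_eqP; rewrite /= scale1r. Qed.
Lemma l_scDr a : {morph lsc a : x y / lad x y}. Proof. by move=> *; apply: sig_eqP; rewrite /= scalerDr. Qed.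
Lemma l_scDl v : {morph lsc^~ v : a b / a + b >-> lad a b}. Proof. by move=> *; apply: sig_eqP; rewrite /= scalerDl. Qed.
Definition SL : lmodType k := @ML k LT lz lad lop lsc l_addA l_addC l_add0 l_addN
  l_scA l_sc1 l_scDr l_scDl.
Definition lval (a : SL) : L := sval (a : LT).
Lemma lval_lin c a b : lval (c *: a + b) = c *: lval a + lval b. Proof. by []. Qed.
Lemma lval_add a b : lval (a + b) = lval a + lval b. Proof. by []. Qed.
Lemma lval_opp a : lval (- a) = - lval a. Proof. by []. Qed.
Lemma lval_zero : lval 0 = 0. Proof. by []. Qed.
Lemma lval_P a : S (lval a). Proof. exact: proj2_sig. Qed.
Lemma SL_eq (a b : SL) : lval a = lval b -> a = b. Proof. exact: sig_eqP. Qed.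
Definition lmk x (Hx : S x) : SL := exist _ x Hx : LT.
Lemma lval_mk x Hx : lval (@lmk x Hx) = x. Proof. by []. Qed.
End SubLmod.
Arguments lmk {k L S S0 Slin} x Hx.

Section Pairs.
Variables (k : fieldType) (M N : lmodType k).
Lemma pD1 (p q : (M * N)%type) : (p + q).1 = p.1 + q.1. Proof. by []. Qed.
Lemma pD2 (p q : (M * N)%type) : (p + q).2 = p.2 + q.2. Proof. by []. Qed.
Lemma pZ1 a (p : (M * N)%type) : (a *: p).1 = a *: p.1. Proof. by []. Qed.
Lemma pZ2 a (p : (M * N)%type) : (a *: p).2 = a *: p.2. Proof. by []. Qed.
Lemma pN1 (p : (M * N)%type) : (- p).1 = - p.1. Proof. by []. Qed.
Lemma pN2 (p : (M * N)%type) : (- p).2 = - p.2. Proof. by []. Qed.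
Lemma pairE (p q : (M * N)%type) : p.1 = q.1 -> p.2 = q.2 -> p = q.
Proof. by case: p q => ? ? [? ?] /= -> ->. Qed.
End Pairs.

Section Main.
Variables (k : fieldType) (V L : lmodType k) (circ br : L -> L -> L) (j : V -> L)
  (HL : is_free_postLie circ br j)
  (U : algType k) (phi : L -> U) (HU : is_UEA (curly circ br) phi).

Let HpL := let: And3 a _ _ := HL in a.
Let Hj := let: And3 _ a _ := HL in a.
Let Huniv := let: And3 _ _ a := HL in a.
Let Hbr := let: And4 a _ _ _ := HpL in a.
Let Hcirc := let: And4 _ a _ _ := HpL in a.
Let Hax1 := let: And4 _ _ a _ := HpL in a.
Let Hax2 := let: And4 _ _ _ a := HpL in a.
Let Hbrbil := let: And3 a _ _ := Hbr in a.

Lemma circDl c x y z : circ (c *: x + y) z = c *: circ x z + circ y z.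
Proof. exact: (proj1 Hcirc z). Qed.
Lemma circDr c x y z : circ z (c *: x + y) = c *: circ z x + circ z y.
Proof. exact: (proj2 Hcirc z). Qed.
Lemma brDl c x y z : br (c *: x + y) z = c *: br x z + br y z.
Proof. exact: (proj1 Hbrbil z). Qed.
Lemma brDr c x y z : br z (c *: x + y) = c *: br z x + br z y.
Proof. exact: (proj2 Hbrbil z). Qed.

Lemma free_unique (g1 g2 : L -> L) :
  is_postLie_hom circ br circ br g1 -> (forall v, g1 (j v) = j v) ->
  is_postLie_hom circ br circ br g2 -> (forall v, g2 (j v) = j v) ->
  forall x, g1 x = g2 x.
Proof.
move=> H1 E1 H2 E2 x.
have [g0 [_ uniq]] := Huniv HpL Hj.
by rewrite (uniq _ H1 E1) (uniq _ H2 E2).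
Qed.

Lemma id_hom : is_postLie_hom circ br circ br id.
Proof. by split. Qed.

Lemma postLie_gen (S : L -> Prop) (Sj : forall v, S (j v))
  (Slin : forall c a b, S a -> S b -> S (c *: a + b))
  (Scirc : forall a b, S a -> S b -> S (circ a b))
  (Sbr : forall a b, S a -> S b -> S (br a b)) : forall x, S x.
Proof.
have S0 : S 0 by have := Slin (-1) _ _ (Sj 0) (Sj 0); rewrite scaleN1r addNr.
pose B := SL S0 Slin.
pose cB (a b : B) : B := @lmk _ _ _ S0 Slin _ (Scirc _ _ (lval_P a) (lval_P b)).
pose bB (a b : B) : B := @lmk _ _ _ S0 Slin _ (Sbr _ _ (lval_P a) (lval_P b)).
have HB : is_postLie cB bB.
  case: HpL => [[[Hb1 Hb2] Hb3 Hb4] [Hc1 Hc2] H1 H2].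
  split; [split; [split|..]|split|..].
  - by move=> y a x1 x2; apply: SL_eq; exact: (Hb1 (lval y) a (lval x1) (lval x2)).
  - by move=> y a x1 x2; apply: SL_eq; exact: (Hb2 (lval y) a (lval x1) (lval x2)).
  - by move=> x; apply: SL_eq; exact: (Hb3 (lval x)).
  - by move=> x y z; apply: SL_eq; exact: (Hb4 (lval x) (lval y) (lval z)).
  - by move=> y a x1 x2; apply: SL_eq; exact: (Hc1 (lval y) a (lval x1) (lval x2)).
  - by move=> y a x1 x2; apply: SL_eq; exact: (Hc2 (lval y) a (lval x1) (lval x2)).
  - by move=> x y z; apply: SL_eq; exact: (H1 (lval x) (lval y) (lval z)).
  - by move=> x y z; apply: SL_eq; exact: (H2 (lval x) (lval y) (lval z)).
have Hjl : is_klinear (fun v => (@lmk _ _ _ S0 Slin _ (Sj v) : B)).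
  by move=> a x y; apply: SL_eq; exact: (Hj a x y).
have [g [[[gl gc gb] gj] _]] := Huniv HB Hjl.
have Hg2 : is_postLie_hom circ br circ br (fun x => lval (g x)).
  split => [a x y|x y|x y]; by rewrite ?gl ?gc ?gb.
have E := free_unique id_hom (fun v => erefl) Hg2 (fun v => congr1 (@lval _ _ _ S0 Slin) (gj v)).
move=> x; have <- : lval (g x) = x by rewrite -E.
exact: lval_P.
Qed.

Notation mag := (in_mag circ j).
Lemma mag_j v : mag (j v). Proof. by move=> S Sj Sz Sl Sc. Qed.
Lemma mag_0 : mag 0. Proof. by move=> S Sj Sz Sl Sc. Qed.
Lemma mag_lin a x y : mag x -> mag y -> mag (a *: x + y).
Proof. by move=> Hx Hy S Sj Sz Sl Sc; apply: (Sl); [exact: (Hx S Sj Sz Sl Sc) | exact: (Hy S Sj Sz Sl Sc)]. Qed.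
Lemma mag_circ x y : mag x -> mag y -> mag (circ x y).
Proof. by move=> Hx Hy S Sj Sz Sl Sc; apply: (Sc); [exact: (Hx S Sj Sz Sl Sc) | exact: (Hy S Sj Sz Sl Sc)]. Qed.
Lemma mag_add x y : mag x -> mag y -> mag (x + y).
Proof. by move=> Hx Hy; have := mag_lin 1 Hx Hy; rewrite scale1r. Qed.
Lemma mag_opp x : mag x -> mag (- x).
Proof. by move=> Hx; have := mag_lin (-1) Hx mag_0; rewrite scaleN1r addr0. Qed.

Inductive lie : nat -> L -> Prop :=
 | lie_mag n x : mag x -> lie n x
 | lie_lin n a x y : lie n x -> lie n y -> lie n (a *: x + y)
 | lie_br n x y : lie n x -> lie n y -> lie n.+1 (br x y).

Lemma lie_S n x : lie n x -> lie n.+1 x.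
Proof.
elim=> [m z Hz|m a z w _ IHz _ IHw|m z w _ IHz _ IHw].
- exact: lie_mag.
- exact: lie_lin.
- exact: lie_br.
Qed.
Lemma lie_le n m x : (n <= m)%N -> lie n x -> lie m x.
Proof.
move=> Hnm Hx; rewrite -(subnK Hnm); elim: (m - n)%N => [|d IH] //.
by rewrite addSn; apply: lie_S.
Qed.
Definition Pm z := forall x, mag x -> mag (circ x z).

Lemma lie_circ n w : lie n w -> forall z, Pm z -> lie n (circ w z).
Proof.
move=> H z Hz; elim: H => [m x Hx|m a x y _ IHx _ IHy|m x y Hx IHx Hy IHy].
- by apply: lie_mag; apply: Hz.
- by rewrite circDl; apply: lie_lin.
- rewrite Hax2 -[br (circ x z) y]scale1r; apply: lie_lin; exact: lie_br.
Qed.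

Lemma P_step n z : lie n z -> (forall m z', (m < n)%N -> lie m z' -> Pm z') -> Pm z.
Proof.
move=> H; elim: H => [m x Hx|m a x y _ IHx _ IHy|m x y Hx IHx Hy IHy] IH w Hw.
- exact: mag_circ.
- by rewrite circDr; apply: mag_lin; [apply: IHx | apply: IHy].
- have IH' : forall m' z', (m' < m)%N -> lie m' z' -> Pm z'.
    by move=> m' z' lt; apply: IH; apply: ltnW.
  have Pmx := IHx IH'; have Pmy := IHy IH'.
  have Pxy : Pm (circ x y) := IH m _ (ltnSn m) (lie_circ Hx Pmy).
  have Pyx : Pm (circ y x) := IH m _ (ltnSn m) (lie_circ Hy Pmx).
  rewrite -Hax1; apply: mag_add; [apply: mag_add; [apply: mag_add|]|].
  + exact: Pmy (Pmx w Hw).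
  + exact: mag_opp (Pxy w Hw).
  + exact: mag_opp (Pmx (circ w y) (Pmy w Hw)).
  + exact: Pyx w Hw.
Qed.

Lemma P_all n z : lie n z -> Pm z.
Proof.
elim/ltn_ind: n z => n IH z H; apply: (P_step H) => m z' lt; exact: IH.
Qed.

Lemma Pm_all z : Pm z.
Proof.
have: exists n, lie n z.
  apply: (@postLie_gen (fun z => exists n, lie n z)) => [v|c a b [n Ha] [m Hb]|a b [n Ha] [m Hb]|a b [n Ha] [m Hb]].
  - by exists 0%N; apply: lie_mag; apply: mag_j.
  - by exists (maxn n m); exact: lie_lin (lie_le (leq_maxl n m) Ha) (lie_le (leq_maxr n m) Hb).
  - by exists n; exact: lie_circ Ha _ (P_all Hb).
  - by exists (maxn n m).+1; exact: lie_br (lie_le (leq_maxl n m) Ha) (lie_le (leq_maxr n m) Hb).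
by case=> n; apply: P_all.
Qed.

Lemma zid (Z : zmodType) (a b c d : Z) : b - c + (a - b - d + c) = a - d.
Proof. rewrite [a - b - d + c]addrC addrA subrK -addrA addrA [b + a]addrC -addrA; congr (_ + _); by rewrite addrA subrr add0r. Qed.

Lemma star_exists : exists star : L -> U -> L,
  is_right_mod star /\ forall x y, star x (phi y) = circ x y.
Proof.
case: (pselect (exists x0 : L, x0 <> 0)) => [[x0 Hx0]|Htriv].
- pose E := EOp Hx0.
  pose psi (y : L) : E := (exist _ _ (proj1 Hcirc y) : ET L).
  have Hpsi : is_lie_to_alg (curly circ br) psi.
    split.
      by move=> a y z; apply: EOp_eq => x; rewrite ev_lin; exact: circDr.
    move=> y z; apply: EOp_eq => x; rewrite ev_sub !ev_mul /=.
    rewrite /curly (klD (proj2 Hcirc x)) (klB (proj2 Hcirc x)) -Hax1.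
    exact: zid.
  have [h [[[hl h1 hm] hphi] _]] := proj2 HU E psi Hpsi.
  exists (fun x a => ev (h a) x); split; last by move=> x y; rewrite hphi.
  split.
  + split => [a|x].
      exact: ev_klin.
    by move=> c a b; rewrite hl ev_lin.
  + by move=> x; rewrite h1.
  + by move=> x a b; rewrite hm.
- have Z : forall x : L, x = 0.
    by move=> x; case: (pselect (x = 0)) => // nx; exfalso; apply: Htriv; exists x.
  exists (fun _ _ => 0); split; last by move=> x y; rewrite (Z (circ x y)).
  split.
  + by split => [a|x] c u w; rewrite scaler0 addr0.
  + by move=> x; rewrite (Z x).
  + by [].
Qed.

Lemma zid2 (Z : zmodType) (a b c : Z) : c = a - b + c - a + b.
Proof. by rewrite [a - b + c - a]addrAC [a - b - a]addrAC subrr add0r addrAC addNr add0r. Qed.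

Lemma main_aux : exists star : L -> U -> L,
    [/\ is_right_mod star,
        (forall x y, star x (phi y) = circ x y),
        (forall x a, mag x -> mag (star x a)) &
        is_free_right_mod_on mag star j].
Proof.
have [star [Hrm Hst]] := star_exists.
have Hrm' := Hrm.
case: Hrm' => [[Hs1 Hs2] Hs_one Hs_mul].
have [[phil phic] _] := HU.
exists star; split => //.
- move=> x a Hx; move: a x Hx.
  apply: (@uea_gen _ _ _ _ _ HU (fun a => forall x, mag x -> mag (star x a))).
  + by move=> x Hx; rewrite Hs_one.
  + by move=> c a b Ha Hb x Hx; rewrite (Hs2 x); apply: mag_lin; [apply: Ha | apply: Hb].
  + by move=> a b Ha Hb x Hx; rewrite -Hs_mul; apply: Hb; apply: Ha.
  + by move=> y x Hx; rewrite Hst; exact: Pm_all.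
- move=> N act Hact f Hf.
  case: Hact => [[Ha1 Ha2] Ha_one Ha_mul].
  pose P := (L * N)%type : lmodType k.
  pose cP (p q : P) : P := (circ p.1 q.1, act p.2 (phi q.1)).
  pose bP (p q : P) : P := (br p.1 q.1, 0).
  have HP : is_postLie cP bP.
    case: HpL => [[[Hb1 Hb2] Hb3 Hb4] [Hc1 Hc2] H1 H2].
    split; [split; [split|..]|split|..].
    - move=> q a p1 p2; rewrite /bP /=; congr (_, _); first exact: Hb1.
      by rewrite /= ?pD2 ?pZ2 scaler0 addr0.
    - move=> q a p1 p2; rewrite /bP /=; congr (_, _); first exact: Hb2.
      by rewrite /= ?pD2 ?pZ2 scaler0 addr0.
    - by move=> p; rewrite /bP /= Hb3.
    - move=> p q r; apply: pairE; rewrite ?pD1 ?pD2 /=; first exact: Hb4.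
      by rewrite !add0r.
    - move=> q a p1 p2; rewrite /cP /=; congr (_, _); first exact: Hc1.
      exact: Ha1.
    - move=> q a p1 p2; rewrite /cP /=; congr (_, _); first exact: Hc2.
      by rewrite phil; exact: Ha2.
    - move=> [x n] [y m] [z p]; apply: pairE; rewrite ?pD1 ?pD2 ?pN1 ?pN2 /=; first exact: H1.
      rewrite !Ha_mul -!(klB (Ha2 n)) -(klD (Ha2 n)); congr (act n _).
      have := phic y z; rewrite /curly (klD phil) (klB phil) => Ec.
      rewrite [phi (br y z)](zid2 (phi (circ y z)) (phi (circ z y))) Ec.
      congr (_ + _); exact: addrAC.
    - move=> [x n] [y m] [z p]; apply: pairE; rewrite ?pD1 ?pD2 ?pN1 ?pN2 /=; first exact: H2.
      by rewrite (kl0 (Ha1 _)) addr0.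
  have Hfl : is_klinear (fun v => (j v, f v) : P).
    by move=> a x y; congr (_, _); [exact: Hj | exact: Hf].
  have [G [[[Gl Gc Gb] Gj] _]] := Huniv HP Hfl.
  have Hfst : forall x, (G x).1 = x.
    move=> x; apply: (@free_unique (fun x => (G x).1) id _ _ id_hom (fun v => erefl)).
    + by split => [a u w|u w|u w]; rewrite ?Gl ?Gc ?Gb.
    + by move=> v; rewrite Gj.
  pose g x := (G x).2.
  have gl : is_klinear g by move=> a x y; rewrite /g Gl.
  have gc : forall x y, g (circ x y) = act (g x) (phi y).
    by move=> x y; rewrite /g Gc /= Hfst.
  have gj : forall v, g (j v) = f v by move=> v; rewrite /g Gj.
  have gint : forall a x, g (star x a) = act (g x) a.
    apply: (@uea_gen _ _ _ _ _ HU (fun a => forall x, g (star x a) = act (g x) a)).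
    + by move=> x; rewrite Hs_one Ha_one.
    + by move=> c a b Ha Hb x; rewrite (Hs2 x) gl Ha Hb (Ha2 (g x)).
    + by move=> a b Ha Hb x; rewrite -Hs_mul Hb Ha Ha_mul.
    + by move=> y x; rewrite Hst gc.
  exists g; split; first split.
  + by move=> c x y _ _; apply: gl.
  + split; last exact: gj.
    by move=> x a _; apply: gint.
  + move=> g' g'l g'i g'j x Hx.
    have g'0 : g' 0 = 0.
      have := g'l 1 0 0 mag_0 mag_0; rewrite scaler0 addr0 scale1r -[X in X = _]addr0.
      by move/addrI.
    suff : mag x /\ g' x = g x by case.
    apply: (Hx (fun x => mag x /\ g' x = g x)).
    * by move=> v; split; [apply: mag_j | rewrite g'j gj].
    * by split; [apply: mag_0 | rewrite g'0 (kl0 gl)].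
    * move=> a y z [my ey] [mz ez]; split; first exact: mag_lin.
      by rewrite g'l // gl ey ez.
    * move=> y z [my ey] [mz ez]; split; first exact: mag_circ.
      by rewrite -Hst g'i // gint ey.
Qed.
End Main.

End Aux.

Theorem mainTheorem17 (k : fieldType) (Hchar : [pchar k] =i pred0)
  (V L : lmodType k) (circ br : L -> L -> L) (j : V -> L)
  (HL : is_free_postLie circ br j)
  (U : algType k) (phi : L -> U) (HU : is_UEA (curly circ br) phi) :
  exists star : L -> U -> L,
    [/\ is_right_mod star,
        (forall x y, star x (phi y) = circ x y),
        (forall x a, in_mag circ j x -> in_mag circ j (star x a)) &
        is_free_right_mod_on (in_mag circ j) star j].
Proof. exact: (Aux.main_aux HL HU). Qed.
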